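(* Let $n\in\mathbb{N}=\{1,2,\dots\}$. Then, with $t_1<\dots<t_n$ the zeros of $H_n$, $$\|h_n\|_1=\int_{-\infty}^\infty|h_n(t)|\,dt=\frac1n\sum_{m=1}^n(-1)^{m+n}h_{n-1}(t_m);$$ with $t_1<\dots<t_{2n+1}$ the zeros of $H_{2n+1}$, $$\int_{-\infty}^\infty\frac{t^{2n}}{(2n)!}|h_{2n+1}(t)|\,dt=\frac{1}{(2n+1)!}\sum_{m=1}^{2n+1}(-1)^{m+1}\sum_{k=0}^{2n}\frac{1}{2^k}t_m^{2n-k}h_{2n-k}(t_m);$$ and with $t_1<\dots<t_{2n}$ the zeros of $H_{2n}$, $$\int_{-\infty}^\infty\frac{|t|^{2n-1}}{(2n-1)!}|h_{2n}(t)|\,dt=\frac{1}{(2n)!}\sum_{m=1}^{n}(-1)^{m+1}\sum_{k=0}^{2n-1}\frac{1}{2^k}t_m^{2n-1-k}h_{2n-1-k}(t_m)+\frac{(-1)^n}{(2n)!\,2^{2n-1}\sqrt{\pi}}+\frac{1}{(2n)!}\sum_{m=n+1}^{2n}(-1)^{m}\sum_{k=0}^{2n-1}\frac{1}{2^k}t_m^{2n-1-k}h_{2n-1-k}(t_m).$$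
   Context: $H_n$ denotes the $n$-th Hermite polynomial ($H_n(t)=(-1)^ne^{t^2}\frac{d^n}{dt^n}e^{-t^2}$), and the Hermite functions are $h_n(t)=\frac{1}{2^nn!\sqrt{\pi}}e^{-t^2}H_n(t)$, $t\in\mathbb{R}$. *)

(* Defs.v *)
From Stdlib Require Import Reals Arith.
From Coquelicot Require Import Coquelicot.
Open Scope R_scope.

Definition hermiteH (n : nat) (t : R) : R :=
  (-1) ^ n * exp (t ^ 2) * Derive_n (fun x => exp (- x ^ 2)) n t.

Definition hermite_fun (n : nat) (t : R) : R :=
  / (2 ^ n * INR (fact n) * sqrt PI) * exp (- t ^ 2) * hermiteH n t.

Definition zeros_enum (f : R -> R) (N : nat) (t : nat -> R) : Prop :=
  (forall i j : nat, (1 <= i)%nat -> (i < j)%nat -> (j <= N)%nat -> t i < t j) /\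
  (forall x : R, f x = 0 <-> exists m : nat, (1 <= m <= N)%nat /\ x = t m).

Definition is_integral_R (f : R -> R) (v : R) : Prop :=
  is_RInt_gen f (Rbar_locally m_infty) (Rbar_locally p_infty) v.

(* Main.v *)
Require Import Defs.
From Stdlib Require Import Reals Arith Lra Lia Psatz.
From Coquelicot Require Import Coquelicot.
Open Scope R_scope.

Lemma d_mult (f g : R -> R) x df dg : is_derive f x df -> is_derive g x dg ->
  is_derive (fun y => f y * g y) x (df * g x + f x * dg).
Proof. rewrite !is_derive_Reals. intros. apply (derivable_pt_lim_mult f g); auto. Qed.
Lemma d_plus (f g : R -> R) x df dg : is_derive f x df -> is_derive g x dg ->
  is_derive (fun y => f y + g y) x (df + dg).
Proof. rewrite !is_derive_Reals. intros. apply (derivable_pt_lim_plus f g); auto. Qed.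
Lemma d_minus (f g : R -> R) x df dg : is_derive f x df -> is_derive g x dg ->
  is_derive (fun y => f y - g y) x (df - dg).
Proof. rewrite !is_derive_Reals. intros. apply (derivable_pt_lim_minus f g); auto. Qed.
Lemma d_scal (f : R -> R) c x df : is_derive f x df ->
  is_derive (fun y => c * f y) x (c * df).
Proof. apply is_derive_scal. Qed.
Lemma d_id x : is_derive (fun y : R => y) x 1.
Proof. rewrite is_derive_Reals. apply derivable_pt_lim_id. Qed.
Lemma d_ext (f g : R -> R) x l l' : (forall t, f t = g t) -> l = l' -> is_derive f x l -> is_derive g x l'.
Proof. intros H ->. apply is_derive_ext. exact H. Qed.

Ltac fixR := match goal with |- @eq _ ?a ?b => change (@eq R a b) end.

Fixpoint Q (n : nat) (x : R) : R :=
  match n with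
  | O => 1
  | S k => match k with
           | O => 2 * x
           | S j => 2 * x * Q k x - 2 * INR k * Q j x
           end
  end.

Definition dQ (n : nat) (x : R) : R :=
  match n with O => 0 | S k => 2 * INR n * Q k x end.

Lemma Q_SS n x : Q (S (S n)) x = 2 * x * Q (S n) x - 2 * INR (S n) * Q n x.
Proof. reflexivity. Qed.

Lemma Q_SS' n x : Q (S (S n)) x = 2 * (x * Q (S n) x) - 2 * INR (S n) * Q n x.
Proof. rewrite Q_SS. ring. Qed.

Lemma Q_rec n x : Q (S n) x = 2 * x * Q n x - dQ n x.
Proof. destruct n. change (Q 1 x) with (2*x). unfold dQ, Q. lra. unfold dQ. rewrite Q_SS. ring. Qed.

Lemma Q_deriv2 n : (forall x, is_derive (Q n) x (dQ n x)) /\ (forall x, is_derive (Q (S n)) x (dQ (S n) x)).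
Proof.
  induction n as [|n [IH1 IH2]].
  - split; intro x.
    + change (Q 0) with (fun _:R => 1). unfold dQ. auto_derive; auto; ring.
    + change (Q 1) with (fun y:R => 2 * y). unfold dQ. change (Q 0 x) with 1.
      auto_derive; auto; rewrite ?S_INR; simpl; ring.
  - split; [exact IH2|]. intro x.
    apply is_derive_ext with (fun y => 2 * (y * Q (S n) y) - 2 * INR (S n) * Q n y).
    { intro t. exact (eq_sym (Q_SS' n t)). }
    replace (dQ (S (S n)) x) with (2 * (1 * Q (S n) x + x * dQ (S n) x) - 2 * INR (S n) * dQ n x).
    2:{ destruct n.
        - simpl. ring.
        - unfold dQ. rewrite !Q_SS. rewrite !S_INR. ring. }
    apply (d_minus (fun y => 2 * (y * Q (S n) y)) (fun y => 2 * INR (S n) * Q n y)).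
    + apply d_scal.
      apply (d_mult (fun y => y) (Q (S n))). apply d_id. apply IH2.
    + apply d_scal. apply IH1.
Qed.

Lemma Q_deriv n x : is_derive (Q n) x (dQ n x).
Proof. apply Q_deriv2. Qed.

Lemma Q_cont n : continuity (Q n).
Proof. intro x. apply derivable_continuous_pt. exists (dQ n x). apply is_derive_Reals. apply Q_deriv. Qed.

Lemma d_gauss x : is_derive (fun y => exp (- y ^ 2)) x (-2 * x * exp (- x ^ 2)).
Proof. auto_derive; auto. simpl. ring. Qed.

Lemma Dn_closed n x : Derive_n (fun y => exp (- y ^ 2)) n x = (-1) ^ n * exp (- x ^ 2) * Q n x.
Proof.
  revert x. induction n as [|n IH]; intro x.
  - simpl. ring.
  - change (Derive (Derive_n (fun y => exp (- y ^ 2)) n) x = (-1) ^ S n * exp (- x ^ 2) * Q (S n) x).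
    rewrite (Derive_ext _ (fun y => (-1) ^ n * (exp (- y ^ 2) * Q n y))).
    2:{ intro t. rewrite IH. ring. }
    apply is_derive_unique.
    eapply d_ext. reflexivity. 2:{ apply d_scal. apply d_mult. apply d_gauss. apply Q_deriv. }
    rewrite Q_rec. simpl. ring.
Qed.

Lemma m1sq n : (-1) ^ n * (-1) ^ n = 1.
Proof. induction n; simpl. ring. replace (-1 * (-1) ^ n * (-1 * (-1) ^ n)) with ((-1)^n * (-1)^n) by ring. exact IHn. Qed.

Lemma hermiteH_Q n t : hermiteH n t = Q n t.
Proof.
  unfold hermiteH. rewrite Dn_closed.
  replace ((-1) ^ n * exp (t ^ 2) * ((-1) ^ n * exp (- t ^ 2) * Q n t))
    with (((-1) ^ n * (-1) ^ n) * (exp (t ^ 2) * exp (- t ^ 2)) * Q n t) by ring.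
  rewrite m1sq, <- exp_plus. replace (t ^ 2 + - t ^ 2) with 0 by ring. rewrite exp_0. ring.
Qed.

Definition cc (n : nat) : R := / (2 ^ n * INR (fact n) * sqrt PI).

Lemma sqrtPI_pos : 0 < sqrt PI.
Proof. apply sqrt_lt_R0. apply PI_RGT_0. Qed.

Lemma cc_pos n : 0 < cc n.
Proof.
  unfold cc. apply Rinv_0_lt_compat. apply Rmult_lt_0_compat. apply Rmult_lt_0_compat.
  apply pow_lt; lra. apply lt_0_INR. apply lt_O_fact. apply sqrtPI_pos.
Qed.

Lemma cc_rel q : cc q = 2 * INR (S q) * cc (S q).
Proof.
  unfold cc. rewrite fact_simpl, mult_INR. simpl pow.
  pose proof sqrtPI_pos. pose proof (INR_fact_neq_0 q). pose proof (pow_lt 2 q ltac:(lra)).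
  assert (INR (S q) <> 0) by (apply not_0_INR; lia).
  field. repeat split; lra.
Qed.

Lemma hf_closed n t : hermite_fun n t = cc n * exp (- t ^ 2) * Q n t.
Proof. unfold hermite_fun. rewrite hermiteH_Q. reflexivity. Qed.

Lemma hf_deriv q x : is_derive (hermite_fun q) x (-2 * INR (S q) * hermite_fun (S q) x).
Proof.
  eapply d_ext. 3:{ apply (d_scal (fun y => exp (- y ^ 2) * Q q y) (cc q)). apply d_mult. apply d_gauss. apply Q_deriv. }
  intro t. rewrite hf_closed. ring.
  fixR. cbv beta. rewrite hf_closed, Q_rec, (cc_rel q). ring.
Qed.

Lemma Q_nocommon n t : Q (S n) t = 0 -> Q n t <> 0.
Proof.
  revert t. induction n as [|n IH]; intros t H1 H0.
  - change (Q 0 t) with 1 in H0. lra.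
  - rewrite Q_SS in H1. apply (IH t H0).
    assert (INR (S n) > 0) by (apply lt_0_INR; lia).
    rewrite H0 in H1. nra.
Qed.

Lemma Q_large k x : INR k + 1 <= x -> 1 <= Q k x /\ Q k x <= Q (S k) x.
Proof.
  revert x. induction k as [|k IH]; intros x Hx.
  - change (Q 0 x) with 1. change (Q 1 x) with (2 * x). simpl in Hx. lra.
  - rewrite S_INR in Hx. destruct (IH x) as [H1 H2]. lra.
    split. lra. rewrite Q_SS. rewrite S_INR.
    assert (0 <= INR k) by apply pos_INR. nra.
Qed.

Lemma Q_odd_even n x : Q n (- x) = (-1) ^ n * Q n x.
Proof.
  assert (H : forall n, Q n (-x) = (-1)^n * Q n x /\ Q (S n) (-x) = (-1)^(S n) * Q (S n) x).
  { induction n0 as [|n0 [IH1 IH2]].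
    - split; simpl. ring. ring.
    - split. exact IH2. rewrite !Q_SS, IH1, IH2. simpl. ring. }
  apply H.
Qed.

Lemma Q_even0 n : Q (2 * n) 0 <> 0.
Proof.
  induction n as [|n IH].
  - simpl. lra.
  - replace (2 * S n)%nat with (S (S (2 * n))) by lia. rewrite Q_SS.
    assert (INR (S (2*n)) > 0) by (apply lt_0_INR; lia). intro HH. apply IH. nra.
Qed.

Lemma Q_bound n : exists C, 0 <= C /\ forall x, Rabs (Q n x) <= C * (1 + x ^ 2) ^ n.
Proof.
  assert (H : forall n, (exists C, 0 <= C /\ forall x, Rabs (Q n x) <= C * (1 + x ^ 2) ^ n) /\
                        (exists C, 0 <= C /\ forall x, Rabs (Q (S n) x) <= C * (1 + x ^ 2) ^ (S n))).
  { induction n0 as [|n0 [IH1 IH2]].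
    - split.
      + exists 1. split. lra. intro x. simpl. rewrite Rabs_R1. lra.
      + exists 2. split. lra. intro x. change (Q 1 x) with (2 * x). simpl.
        rewrite Rabs_mult, Rabs_right by lra.
        assert (Rabs x <= 1 + x * (x * 1)).
        { destruct (Rle_dec 0 x); [rewrite Rabs_right by lra | rewrite Rabs_left by lra]; nra. }
        lra.
    - split. exact IH2.
      destruct IH1 as [C0 [HC0 H0]]. destruct IH2 as [C1 [HC1 H1]].
      exists (2 * C1 + 2 * INR (S n0) * C0). split.
      { assert (0 <= INR (S n0)) by apply pos_INR. nra. }
      intro x. rewrite Q_SS.
      set (y := 1 + x ^ 2).
      assert (Hy : 1 <= y) by (unfold y; nra).
      assert (Hax : Rabs x <= y).
      { unfold y. destruct (Rle_dec 0 x); [rewrite Rabs_right by lra | rewrite Rabs_left by lra]; nra. }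
      assert (Hp : 0 < y ^ n0) by (apply pow_lt; lra).
      assert (HN : 0 <= INR (S n0)) by apply pos_INR.
      specialize (H0 x). specialize (H1 x). fold y in H0, H1.
      eapply Rle_trans. apply Rabs_triang. rewrite Rabs_Ropp, !Rabs_mult.
      rewrite (Rabs_right 2) by lra. rewrite (Rabs_right (INR (S n0))) by lra.
      assert (A1 : Rabs x * Rabs (Q (S n0) x) <= y * (C1 * y ^ S n0)).
      { apply Rmult_le_compat; auto using Rabs_pos. }
      assert (A2 : y ^ n0 <= y ^ S (S n0)) by (apply Rle_pow; auto).
      assert (A3 : Rabs (Q n0 x) <= C0 * y ^ S (S n0)).
      { eapply Rle_trans. apply H0. apply Rmult_le_compat_l; auto. }
      replace (y ^ S (S n0)) with (y * y ^ S n0) in * by (simpl; ring).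
      nra. }
  apply H.
Qed.

Definition decays (G : R -> R) := exists C K, 0 <= C /\
  forall x, Rabs (G x) <= C * (1 + x ^ 2) ^ K * exp (- x ^ 2).

Lemma exp_INR_mult m a : exp (INR m * a) = exp a ^ m.
Proof.
  induction m. simpl. rewrite Rmult_0_l. apply exp_0.
  rewrite S_INR, Rmult_plus_distr_r, Rmult_1_l, exp_plus, IHm. simpl. ring.
Qed.

Lemma exp_ge_pow m y : (0 < m)%nat -> 0 <= y -> (y / INR m) ^ m <= exp y.
Proof.
  intros Hm Hy. assert (HmR : 0 < INR m) by (apply lt_0_INR; lia).
  replace y with (INR m * (y / INR m)) at 2 by (field; lra).
  rewrite exp_INR_mult. apply pow_incr. split.
  apply Rdiv_le_0_compat; lra. pose proof (exp_ineq1_le (y / INR m)). lra.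
Qed.

Lemma key_bound K x : (1 + x ^ 2) ^ K * exp (- x ^ 2) <= exp 1 * INR (S K) ^ (S K) / (1 + x ^ 2).
Proof.
  set (y := 1 + x ^ 2). assert (Hy : 1 <= y) by (unfold y; nra).
  replace (- x ^ 2) with (1 + - y) by (unfold y; ring). rewrite exp_plus, exp_Ropp.
  pose proof (exp_ge_pow (S K) y ltac:(lia) ltac:(lra)) as He.
  assert (Hm : 0 < INR (S K)) by (apply lt_0_INR; lia).
  assert (Hey : 0 < exp y) by apply exp_pos.
  assert (HyK : 0 < y ^ K) by (apply pow_lt; lra).
  assert (Hm2 : 0 < INR (S K) ^ S K) by (apply pow_lt; lra).
  unfold Rdiv in He. rewrite Rpow_mult_distr, pow_inv in He.
  pose proof (exp_pos 1).
  apply (Rmult_le_reg_r (y * exp y)). nra.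
  replace (y ^ K * (exp 1 * / exp y) * (y * exp y)) with (exp 1 * (y * y ^ K)) by (field; lra).
  replace (exp 1 * INR (S K) ^ S K / y * (y * exp y)) with (exp 1 * (INR (S K) ^ S K * exp y)) by (field; lra).
  apply Rmult_le_compat_l. lra.
  apply (Rmult_le_reg_r (/ INR (S K) ^ S K)). apply Rinv_0_lt_compat; lra.
  replace (INR (S K) ^ S K * exp y * / INR (S K) ^ S K) with (exp y) by (field; lra).
  replace (y * y ^ K) with (y ^ S K) by (simpl; ring). lra.
Qed.

Lemma ball0 (eps : posreal) z : Rabs z < eps -> ball 0 eps z.
Proof. intro H. unfold ball; simpl; unfold AbsRing_ball, abs, minus, plus, opp; simpl. rewrite Ropp_0, Rplus_0_r. exact H. Qed.

Lemma decays_lim G : decays G ->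
  filterlim G (Rbar_locally m_infty) (locally 0) /\ filterlim G (Rbar_locally p_infty) (locally 0).
Proof.
  intros [C [K [HC HG]]].
  set (B := C * (exp 1 * INR (S K) ^ S K)).
  assert (HB : 0 <= B).
  { unfold B. apply Rmult_le_pos; auto. apply Rmult_le_pos. pose proof (exp_pos 1); lra.
    apply pow_le. apply pos_INR. }
  assert (Hb : forall x, Rabs (G x) <= B / (1 + x ^ 2)).
  { intro x. eapply Rle_trans. apply HG. unfold B. unfold Rdiv. rewrite Rmult_assoc, Rmult_assoc.
    apply Rmult_le_compat_l; auto. pose proof (key_bound K x). unfold Rdiv in H. lra. }
  assert (Hf : forall eps : posreal, forall x, B / eps + 1 <= x ^ 2 -> Rabs (G x) < eps).
  { intros eps x Hx. eapply Rle_lt_trans. apply Hb. pose proof (cond_pos eps).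
    apply (Rmult_lt_reg_r (1 + x^2)). nra. unfold Rdiv. rewrite Rmult_assoc, Rinv_l by nra.
    assert (B / eps < x ^ 2) by lra. apply (Rmult_lt_compat_l eps) in H0; auto.
    replace (eps * (B / eps)) with B in H0 by (field; lra). nra. }
  split; apply filterlim_locally; intro eps; pose proof (cond_pos eps).
  - exists (- (B / eps + 1)). intros x Hx. apply ball0. apply Hf.
    assert (0 <= B / eps) by (apply Rdiv_le_0_compat; lra). nra.
  - exists (B / eps + 1). intros x Hx. apply ball0. apply Hf.
    assert (0 <= B / eps) by (apply Rdiv_le_0_compat; lra). nra.
Qed.

Lemma decays_plus F G : decays F -> decays G -> decays (fun x => F x + G x).
Proof.
  intros [C1 [K1 [H1 HF]]] [C2 [K2 [H2 HG]]]. exists (C1 + C2), (K1 + K2)%nat. split. lra.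
  intro x. eapply Rle_trans. apply Rabs_triang.
  assert (Hy : 1 <= 1 + x ^ 2) by nra.
  pose proof (Rle_pow _ K1 (K1 + K2) Hy ltac:(lia)).
  pose proof (Rle_pow _ K2 (K1 + K2) Hy ltac:(lia)).
  pose proof (HF x). pose proof (HG x). pose proof (exp_pos (- x ^ 2)).
  assert (C1 * (1 + x ^ 2) ^ K1 * exp (- x ^ 2) <= C1 * (1 + x ^ 2) ^ (K1 + K2) * exp (- x ^ 2)).
  { apply Rmult_le_compat_r. lra. apply Rmult_le_compat_l; lra. }
  assert (C2 * (1 + x ^ 2) ^ K2 * exp (- x ^ 2) <= C2 * (1 + x ^ 2) ^ (K1 + K2) * exp (- x ^ 2)).
  { apply Rmult_le_compat_r. lra. apply Rmult_le_compat_l; lra. }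
  lra.
Qed.

Lemma decays_scal c F : decays F -> decays (fun x => c * F x).
Proof.
  intros [C [K [H HF]]]. exists (Rabs c * C), K. split. apply Rmult_le_pos; auto using Rabs_pos.
  intro x. rewrite Rabs_mult. rewrite !Rmult_assoc. apply Rmult_le_compat_l. apply Rabs_pos.
  rewrite <- Rmult_assoc. apply HF.
Qed.

Lemma decays_hf p q : decays (fun x => x ^ p * hermite_fun q x).
Proof.
  destruct (Q_bound q) as [C [HC HQ]].
  exists (cc q * C), (p + q)%nat. split. pose proof (cc_pos q). nra.
  intro x. rewrite hf_closed. rewrite !Rabs_mult.
  rewrite (Rabs_right (cc q)) by (pose proof (cc_pos q); lra).
  rewrite (Rabs_right (exp _)) by (pose proof (exp_pos (- x ^ 2)); lra).
  rewrite pow_add.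
  assert (Hp : Rabs (x ^ p) <= (1 + x ^ 2) ^ p).
  { rewrite <- RPow_abs. apply pow_incr. split. apply Rabs_pos.
    destruct (Rle_dec 0 x); [rewrite Rabs_right by lra | rewrite Rabs_left by lra]; nra. }
  pose proof (HQ x). pose proof (exp_pos (- x ^ 2)). pose proof (cc_pos q).
  assert (0 <= (1 + x^2)^q) by (apply pow_le; nra).
  assert (Rabs (x ^ p) * Rabs (Q q x) <= (1 + x ^ 2) ^ p * (C * (1 + x ^ 2) ^ q)).
  { apply Rmult_le_compat; auto using Rabs_pos. }
  assert (0 <= Rabs (x ^ p) * Rabs (Q q x)) by (apply Rmult_le_pos; apply Rabs_pos).
  replace (Rabs (x ^ p) * (cc q * exp (- x ^ 2) * Rabs (Q q x))) with
    ((cc q * exp (- x ^ 2)) * (Rabs (x ^ p) * Rabs (Q q x))) by ring.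
  replace (cc q * C * ((1 + x ^ 2) ^ p * (1 + x ^ 2) ^ q) * exp (- x ^ 2)) with
    ((cc q * exp (- x ^ 2)) * ((1 + x ^ 2) ^ p * (C * (1 + x ^ 2) ^ q))) by ring.
  apply Rmult_le_compat_l. nra. exact H3.
Qed.

Lemma piece_gen (Fa Fb : (R -> Prop) -> Prop) {FFa : Filter Fa} {FFb : Filter Fb}
  (F G g : R -> R) (s la lb : R) :
  (forall x, is_derive G x (g x)) -> (forall x, continuous g x) ->
  filterlim G Fa (locally la) -> filterlim G Fb (locally lb) ->
  filter_prod Fa Fb (fun ab => forall x, Rmin (fst ab) (snd ab) < x < Rmax (fst ab) (snd ab) -> F x = s * g x) ->
  is_RInt_gen F Fa Fb (s * (lb - la)).
Proof.
  intros HG Hg Ha Hb Hext.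
  assert (HD : forall t, Derive G t = g t) by (intro t; apply is_derive_unique; apply HG).
  assert (H1 : is_RInt_gen (Derive G) Fa Fb (lb - la)).
  { apply is_RInt_gen_Derive; auto.
    - apply filter_forall. intros ab x _. exists (g x). apply HG.
    - apply filter_forall. intros ab x _. apply continuous_ext with g. intro t; symmetry; apply HD. apply Hg. }
  assert (H2 : is_RInt_gen g Fa Fb (lb - la)).
  { eapply is_RInt_gen_ext. 2: exact H1. apply filter_forall. intros ab x _. apply HD. }
  pose proof (@is_RInt_gen_scal R_NormedModule Fa Fb _ _ g s _ H2) as H3.
  eapply is_RInt_gen_ext. 2: exact H3.
  eapply filter_imp. 2: exact Hext. intros ab H x Hx. simpl. rewrite H by exact Hx. reflexivity.
Qed.

Lemma lim_at_point (G : R -> R) a : filterlim G (at_point a) (locally (G a)).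
Proof. apply filterlim_locally. intro eps. unfold at_point. apply ball_center. Qed.

Lemma m1S m : (-1) ^ (S m) = - (-1) ^ m.
Proof. simpl. ring. Qed.

Lemma alt_integral K (p : nat -> R) (F G g : R -> R) :
  (1 <= K)%nat -> (forall i j, (1 <= i)%nat -> (i < j)%nat -> (j <= K)%nat -> p i < p j) ->
  (forall x, is_derive G x (g x)) -> (forall x, continuous g x) ->
  filterlim G (Rbar_locally m_infty) (locally 0) -> filterlim G (Rbar_locally p_infty) (locally 0) ->
  (forall j x, (j <= K)%nat -> (j = 0%nat \/ p j < x) -> (j = K \/ x < p (S j)) -> F x = (-1) ^ (K - j) * g x) ->
  is_integral_R F (-2 * sum_n_m (fun j => (-1) ^ (K - j) * G (p j)) 1 K).
Proof.
  intros HK Hp HG Hg Hm Hpl HF.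
  assert (Claim : forall j, (S j <= K)%nat ->
    is_RInt_gen F (Rbar_locally m_infty) (at_point (p (S j)))
      (-2 * sum_n_m (fun j => (-1) ^ (K - j) * G (p j)) 1 j - (-1) ^ (K - S j) * G (p (S j)))).
  { induction j as [|j IH]; intro Hj.
    - rewrite sum_n_m_zero by lia. 
      replace (-2 * zero - (-1) ^ (K - 1) * G (p 1%nat)) with ((-1) ^ (K - 0) * (G (p 1%nat) - 0)).
      2:{ replace (K - 0)%nat with (S (K - 1)) by lia. rewrite m1S. change (zero : R) with 0. ring. }
      eapply (piece_gen _ _ F G g); auto. apply lim_at_point.
      exists (fun a => a < p 1%nat) (fun b => b = p 1%nat). exists (p 1%nat); auto. reflexivity.
      intros a b Ha Hb. subst b. intros x Hx. simpl in Hx.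
      rewrite Rmin_left in Hx by lra. rewrite Rmax_right in Hx by lra.
      apply HF. lia. left; reflexivity. right; lra.
    - specialize (IH ltac:(lia)).
      assert (Hlt : p (S j) < p (S (S j))) by (apply Hp; lia).
      assert (H2 : is_RInt_gen F (at_point (p (S j))) (at_point (p (S (S j))))
                     ((-1) ^ (K - S j) * (G (p (S (S j))) - G (p (S j))))).
      { eapply (piece_gen _ _ F G g); auto using lim_at_point.
        exists (fun a => a = p (S j)) (fun b => b = p (S (S j))); try reflexivity.
        intros a b -> ->. intros x Hx. simpl in Hx.
        rewrite Rmin_left in Hx by lra. rewrite Rmax_right in Hx by lra.
        apply HF. lia. right; lra. right; lra. }
      pose proof (is_RInt_gen_Chasles _ _ _ _ IH H2) as H3.
      replace (-2 * sum_n_m (fun j0 : nat => (-1) ^ (K - j0) * G (p j0)) 1 (S j) -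
               (-1) ^ (K - S (S j)) * G (p (S (S j)))) with
        (plus (-2 * sum_n_m (fun j0 : nat => (-1) ^ (K - j0) * G (p j0)) 1 j - (-1) ^ (K - S j) * G (p (S j)))
              ((-1) ^ (K - S j) * (G (p (S (S j))) - G (p (S j))))).
      exact H3.
      rewrite sum_n_Sm by lia. change plus with Rplus.
      replace (K - S j)%nat with (S (K - S (S j))) by lia. rewrite m1S. fixR. ring. }
  destruct K as [|K]. lia.
  unfold is_integral_R.
  assert (H2 : is_RInt_gen F (at_point (p (S K))) (Rbar_locally p_infty) ((-1) ^ (S K - S K) * (0 - G (p (S K))))).
  { eapply (piece_gen _ _ F G g); auto using lim_at_point.
    exists (fun a => a = p (S K)) (fun b => p (S K) < b). reflexivity. exists (p (S K)); auto.
    intros a b -> Hb. intros x Hx. simpl in Hx.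
    rewrite Rmin_left in Hx by lra. rewrite Rmax_right in Hx by lra.
    apply HF. lia. right; lra. left; reflexivity. }
  pose proof (@is_RInt_gen_Chasles R_NormedModule (Rbar_locally m_infty) (Rbar_locally p_infty) _ _ F (p (S K)) _ _ (Claim K ltac:(lia)) H2) as H3.
  rewrite sum_n_Sm by lia. change plus with Rplus. change plus with Rplus in H3.
  rewrite Nat.sub_diag in *. rewrite pow_O in *.
  replace (-2 * (sum_n_m (fun j : nat => (-1) ^ (S K - j) * G (p j)) 1 K + 1 * G (p (S K)))) with
    (-2 * sum_n_m (fun j : nat => (-1) ^ (S K - j) * G (p j)) 1 K - 1 * G (p (S K)) + 1 * (0 - G (p (S K)))) by ring.
  exact H3.
Qed.

Lemma ivt_both (f : R -> R) a b : continuity f -> f a * f b < 0 ->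
  exists z, Rmin a b <= z <= Rmax a b /\ f z = 0.
Proof.
  intros Hc Hab.
  destruct (Rle_lt_dec a b) as [Hle|Hlt].
  - destruct (Rle_lt_or_eq_dec _ _ Hle) as [Hlt|Heq].
    2:{ subst. nra. }
    rewrite Rmin_left, Rmax_right by lra.
    destruct (Rlt_dec (f a) 0) as [Ha|Ha].
    + assert (0 < f b) by nra. destruct (IVT f a b Hc Hlt Ha H) as [z Hz]. exists z; tauto.
    + assert (f a > 0) by (destruct (Rtotal_order (f a) 0) as [|[|]]; nra).
      assert (f b < 0) by nra.
      assert (Hc' : continuity (fun x => - f x)) by (apply continuity_opp; auto).
      destruct (IVT (fun x => - f x) a b Hc' Hlt ltac:(lra) ltac:(lra)) as [z Hz]. exists z. split. tauto. lra.
  - rewrite Rmin_right, Rmax_left by lra.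
    destruct (Rlt_dec (f b) 0) as [Hb|Hb].
    + assert (0 < f a) by nra. destruct (IVT f b a Hc Hlt Hb H) as [z Hz]. exists z; tauto.
    + assert (f b > 0) by (destruct (Rtotal_order (f b) 0) as [|[|]]; nra).
      assert (f a < 0) by nra.
      assert (Hc' : continuity (fun x => - f x)) by (apply continuity_opp; auto).
      destruct (IVT (fun x => - f x) b a Hc' Hlt ltac:(lra) ltac:(lra)) as [z Hz]. exists z. split. tauto. lra.
Qed.

Lemma local_sign (P : R -> R) c d : is_derive P c d -> P c = 0 -> d <> 0 ->
  exists del, 0 < del /\ forall h, 0 < Rabs h < del -> P (c + h) * h * d > 0.
Proof.
  intros HD H0 Hd. rewrite is_derive_Reals in HD.
  assert (Hpos : 0 < Rabs d) by (apply Rabs_pos_lt; auto).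
  destruct (HD (Rabs d) Hpos) as [del Hdel].
  exists del. split. apply cond_pos. intros h [Hh1 Hh2].
  assert (Hh : h <> 0) by (intro; subst; rewrite Rabs_R0 in Hh1; lra).
  specialize (Hdel h Hh Hh2). rewrite H0, Rminus_0_r in Hdel.
  set (u := P (c + h) / h) in *.
  assert (Hu : u * d > 0).
  { destruct (Rle_dec 0 d) as [Hd0|Hd0].
    - rewrite (Rabs_right d) in Hpos, Hdel by lra.
      apply Rabs_def2 in Hdel. nra.
    - rewrite (Rabs_left d) in Hpos, Hdel by lra.
      apply Rabs_def2 in Hdel. nra. }
  replace (P (c + h)) with (u * h) by (unfold u; field; auto).
  assert (h * h > 0) by (apply Rsqr_pos_lt in Hh; unfold Rsqr in Hh; lra).
  nra.
Qed.

Definition inI (N : nat) (t : nat -> R) (j : nat) (x : R) : Prop :=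
  (j = 0%nat \/ t j < x) /\ (j = N \/ x < t (S j)).

Lemma inI_convex N t j x y z : inI N t j x -> inI N t j y -> Rmin x y <= z <= Rmax x y -> inI N t j z.
Proof.
  intros [[H1|H1] [H2|H2]] [[H3|H3] [H4|H4]] Hz; unfold inI;
  pose proof (Rmin_l x y); pose proof (Rmin_r x y); pose proof (Rmax_l x y); pose proof (Rmax_r x y);
  pose proof (Rmin_Rmax x y); unfold Rmin, Rmax in *; repeat destruct Rle_dec; split; auto; lra.
Qed.

Lemma t_mono N (t : nat -> R) : (forall i j, (1 <= i)%nat -> (i < j)%nat -> (j <= N)%nat -> t i < t j) ->
  forall i j, (1 <= i)%nat -> (i <= j)%nat -> (j <= N)%nat -> t i <= t j.
Proof. intros H i j H1 H2 H3. destruct (Nat.eq_dec i j). subst; lra. left; apply H; lia. Qed.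

Lemma inI_nozero N t (P : R -> R) j x : zeros_enum P N t -> (j <= N)%nat -> inI N t j x -> P x <> 0.
Proof.
  intros [Hinc Hz] Hj [HL HR] HP. apply Hz in HP. destruct HP as [m [Hm ->]].
  pose proof (t_mono N t Hinc) as Hmo.
  destruct (le_lt_dec m j).
  - destruct HL as [HL|HL]. lia. pose proof (Hmo m j ltac:(lia) ltac:(lia) ltac:(lia)). lra.
  - destruct HR as [HR|HR]. lia. pose proof (Hmo (S j) m ltac:(lia) ltac:(lia) ltac:(lia)). lra.
Qed.

Lemma const_sign N t (P : R -> R) j s x y : zeros_enum P N t -> continuity P -> (j <= N)%nat ->
  inI N t j x -> inI N t j y -> s * P y > 0 -> s * P x > 0.
Proof.
  intros Hz Hc Hj Hx Hy Hs.
  destruct (Rtotal_order (s * P x) 0) as [Hlt|[Heq|Hgt]]; auto.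
  - destruct (ivt_both P x y Hc) as [z [Hz1 Hz2]].
    { assert (s * P x * (s * P y) < 0) by nra. nra. }
    exfalso. apply (inI_nozero N t P j z Hz Hj); auto. eapply inI_convex. exact Hx. exact Hy. exact Hz1.
  - exfalso. assert (P x <> 0) by (apply (inI_nozero N t P j x); auto).
    assert (s <> 0) by (intro; subst; lra). apply Rmult_integral in Heq. tauto.
Qed.

Lemma pos_of_prod a b : a * b > 0 -> b > 0 -> a > 0.
Proof. intros H1 H2. destruct (Rtotal_order a 0) as [|[|]]; nra. Qed.

Lemma sign_intervals N t (P : R -> R) : (1 <= N)%nat -> zeros_enum P N t -> continuity P ->
  (forall m, (1 <= m <= N)%nat -> exists d, d <> 0 /\ is_derive P (t m) d) ->
  (exists x0, t N < x0 /\ P x0 > 0) ->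
  forall j x, (j <= N)%nat -> inI N t j x -> (-1) ^ (N - j) * P x > 0.
Proof.
  intros HN HZ Hc Hd [x0 [Hx0 Hx0p]].
  pose proof HZ as [Hinc Hzer].
  assert (Main : forall k, (k <= N)%nat -> forall x, inI N t (N - k) x -> (-1) ^ (N - (N - k)) * P x > 0).
  { induction k as [|k IH]; intros Hk x Hx.
    - rewrite Nat.sub_0_r in *. rewrite Nat.sub_diag, pow_O.
      apply (const_sign N t P N 1 x x0); auto. split; [right; auto | left; auto]. lra.
    - set (j := (N - S k)%nat) in *.
      assert (HjS : (S j = N - k)%nat) by (unfold j; lia).
      set (c := t (S j)).
      assert (Hc0 : P c = 0) by (apply Hzer; exists (S j); split; [lia|reflexivity]).
      destruct (Hd (S j) ltac:(lia)) as [d [Hd0 HD]].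
      destruct (local_sign P c d HD Hc0 Hd0) as [del [Hdel Hloc]].
      assert (HR : exists hR, 0 < hR /\ forall h, 0 < h < hR -> inI N t (S j) (c + h)).
      { destruct (Nat.eq_dec (S j) N) as [E|E].
        - exists 1. split. lra. intros h Hh. split. right; unfold c; lra. left; auto.
        - assert (t (S j) < t (S (S j))) by (apply Hinc; lia).
          exists (t (S (S j)) - c). split. unfold c; lra. intros h Hh. split. right; unfold c; lra. right; lra. }
      assert (HL : exists hL, 0 < hL /\ forall h, 0 < h < hL -> inI N t j (c - h)).
      { destruct (Nat.eq_dec j 0) as [E|E].
        - exists 1. split. lra. intros h Hh. split. left; auto. right; unfold c; lra.
        - assert (t j < t (S j)) by (apply Hinc; lia).
          exists (c - t j). split. unfold c; lra. intros h Hh. split. right; lra. right; unfold c; lra. }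
      destruct HR as [hR [HhR HR]]. destruct HL as [hL [HhL HL]].
      set (h := Rmin del (Rmin hL hR) / 2).
      assert (Hh0 : 0 < h).
      { unfold h. assert (0 < Rmin hL hR) by (apply Rmin_glb_lt; auto).
        assert (0 < Rmin del (Rmin hL hR)) by (apply Rmin_glb_lt; auto). lra. }
      assert (Hh1 : h < del /\ h < hL /\ h < hR).
      { unfold h. pose proof (Rmin_l del (Rmin hL hR)). pose proof (Rmin_r del (Rmin hL hR)).
        pose proof (Rmin_l hL hR). pose proof (Rmin_r hL hR). lra. }
      assert (IHy := IH ltac:(lia) (c + h)). rewrite <- HjS in IHy.
      specialize (IHy (HR h ltac:(lra))).
      assert (L1 := Hloc h). assert (L2 := Hloc (- h)).
      rewrite Rabs_right in L1 by lra. rewrite Rabs_Ropp, Rabs_right in L2 by lra.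
      specialize (L1 ltac:(lra)). specialize (L2 ltac:(lra)).
      replace (c + - h) with (c - h) in L2 by ring.
      set (s := (-1) ^ (N - S j)) in *.
      assert (Hs2 : s * s = 1) by apply m1sq.
      assert (Hsd : s * d > 0).
      { apply (pos_of_prod _ (P (c + h) * P (c + h) * h)).
        replace (s * d * (P (c + h) * P (c + h) * h)) with ((s * P (c + h)) * (P (c + h) * h * d)) by ring.
        apply Rmult_gt_0_compat; auto.
        assert (P (c + h) <> 0) by (intro HH; rewrite HH in IHy; lra).
        assert (P (c + h) * P (c + h) > 0) by (apply Rsqr_pos_lt in H; unfold Rsqr in H; lra). nra. }
      assert (Hy' : (-1) ^ (N - j) * P (c - h) > 0).
      { replace (N - j)%nat with (S (N - S j)) by lia. rewrite m1S. fold s.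
        apply (pos_of_prod _ (s * d)); auto.
        replace (- s * P (c - h) * (s * d)) with ((s * s) * (P (c - h) * - h * d) / h) by (field; lra).
        rewrite Hs2. apply Rdiv_lt_0_compat; lra. }
      replace (N - (N - S k))%nat with (N - j)%nat by (unfold j; lia).
      apply (const_sign N t P j _ x (c - h)); auto. unfold j; lia. apply HL; lra. }
  intros j x Hj Hx.
  replace j with (N - (N - j))%nat in Hx by lia.
  pose proof (Main (N - j)%nat ltac:(lia) x Hx). replace (N - (N - j))%nat with j in * by lia. auto.
Qed.

Lemma zeros_enum_Q N t : zeros_enum (hermiteH N) N t -> zeros_enum (Q N) N t.
Proof.
  intros [H1 H2]. split; auto. intro x. rewrite <- hermiteH_Q. apply H2.
Qed.

Lemma Q_sign N t : (1 <= N)%nat -> zeros_enum (Q N) N t ->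
  forall j x, (j <= N)%nat -> inI N t j x -> (-1) ^ (N - j) * Q N x > 0.
Proof.
  intros HN HZ. apply sign_intervals; auto. apply Q_cont.
  - intros m Hm. exists (dQ N (t m)). split. 2: apply Q_deriv.
    destruct N as [|N']. lia. unfold dQ.
    assert (Q (S N') (t m) = 0) by (apply (proj2 HZ); exists m; split; auto).
    pose proof (Q_nocommon N' (t m) H). assert (INR (S N') > 0) by (apply lt_0_INR; lia).
    intro HH. apply H0. nra.
  - exists (Rmax (t N) (INR N) + 1). split. pose proof (Rmax_l (t N) (INR N)). lra.
    destruct (Q_large N (Rmax (t N) (INR N) + 1)). pose proof (Rmax_r (t N) (INR N)). lra. lra.
Qed.

Lemma abs_hf_sign N x s : s * s = 1 -> s * Q N x > 0 -> Rabs (hermite_fun N x) = s * hermite_fun N x.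
Proof.
  intros Hs HQ. rewrite hf_closed.
  assert (Habs : Rabs s = 1).
  { assert (Rabs s * Rabs s = 1) by (rewrite <- Rabs_mult, Hs; apply Rabs_R1).
    pose proof (Rabs_pos s). nra. }
  assert (0 < cc N * exp (- x ^ 2)) by (apply Rmult_lt_0_compat; [apply cc_pos | apply exp_pos]).
  assert (Hp : s * (cc N * exp (- x ^ 2) * Q N x) > 0) by nra.
  rewrite <- (Rabs_right (s * _)) by lra. rewrite (Rabs_mult s), Habs. ring.
Qed.

Lemma pow_m1_sub n j : (j <= n)%nat -> (-1) ^ (n - j) = (-1) ^ (j + n).
Proof.
  intro H. replace (j + n)%nat with ((n - j) + (j + j))%nat by lia.
  rewrite pow_add, pow_add, m1sq. ring.
Qed.

Lemma decays_ext F G : (forall x, F x = G x) -> decays F -> decays G.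
Proof. intros H [C [K [HC HF]]]. exists C, K. split; auto. intro x. rewrite <- H. apply HF. Qed.

Lemma hf_cont q x : continuous (hermite_fun q) x.
Proof. apply (ex_derive_continuous (K:=R_AbsRing) (V:=R_NormedModule)). eexists. apply hf_deriv. Qed.

Lemma integral_eq F v w : is_integral_R F v -> v = w -> is_integral_R F w.
Proof. intros H ->. exact H. Qed.

Lemma sum_scal c (a : nat -> R) n m : sum_n_m (fun k => c * a k) n m = c * sum_n_m a n m.
Proof. apply (sum_n_m_mult_l (K := R_Ring)). Qed.

Lemma part1 (n : nat) (hn : (1 <= n)%nat) :
  forall t : nat -> R, zeros_enum (hermiteH n) n t ->
     is_integral_R (fun x => Rabs (hermite_fun n x))
       (/ INR n * sum_n_m (fun m => (-1) ^ (m + n) * hermite_fun (n - 1) (t m)) 1 n).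
Proof.
  intros t HZ. apply zeros_enum_Q in HZ.
  assert (HnR : INR n > 0) by (apply lt_0_INR; lia).
  eapply integral_eq.
  - apply (alt_integral n t _ (fun x => - / (2 * INR n) * hermite_fun (n - 1) x) (hermite_fun n)); auto.
    + apply HZ.
    + intro x. eapply d_ext. reflexivity. 2: apply d_scal, hf_deriv.
      replace (S (n - 1)) with n by lia. fixR. field. lra.
    + apply hf_cont.
    + apply decays_lim. apply decays_scal. eapply decays_ext. 2: apply (decays_hf 0 (n - 1)).
      intro x. cbv beta. rewrite pow_O. ring.
    + apply decays_lim. apply decays_scal. eapply decays_ext. 2: apply (decays_hf 0 (n - 1)).
      intro x. cbv beta. rewrite pow_O. ring.
    + intros j x Hj H1 H2. apply abs_hf_sign. apply m1sq. apply (Q_sign n t); auto. split; auto.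
  - rewrite (sum_n_m_ext_loc _ (fun j => (- / (2 * INR n)) * ((-1) ^ (j + n) * hermite_fun (n - 1) (t j)))).
    + rewrite sum_scal. field. lra.
    + intros k Hk. rewrite pow_m1_sub by lia. fixR. ring.
Qed.

Fixpoint Sf (M : nat) (x : R) : R :=
  match M with
  | O => hermite_fun 0 x
  | S M' => x ^ (S M') * hermite_fun (S M') x + Sf M' x / 2
  end.

Lemma Sf_sum M x : Sf M x = sum_n_m (fun k => / 2 ^ k * x ^ (M - k) * hermite_fun (M - k) x) 0 M.
Proof.
  induction M as [|M IH].
  - rewrite sum_n_n. simpl. field.
  - rewrite sum_Sn_m by lia. rewrite <- sum_n_m_S.
    rewrite (sum_n_m_ext _ (fun k => / 2 * (/ 2 ^ k * x ^ (M - k) * hermite_fun (M - k) x))).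
    2:{ intro k. simpl. field. apply pow_nonzero. lra. }
    rewrite sum_scal, <- IH. change plus with Rplus.
    change (Sf (S M) x) with (x ^ S M * hermite_fun (S M) x + Sf M x / 2).
    rewrite Nat.sub_0_r, pow_O. fixR. field.
Qed.

Lemma d_pow k x : is_derive (fun y => y ^ k) x (INR k * x ^ Nat.pred k).
Proof. rewrite is_derive_Reals. apply derivable_pt_lim_pow. Qed.

Lemma Sf_deriv M x : is_derive (Sf M) x (-2 * INR (S M) * x ^ M * hermite_fun (S M) x).
Proof.
  revert x. induction M as [|M IH]; intro x.
  - eapply d_ext. 3: apply hf_deriv. reflexivity. simpl. ring.
  - eapply d_ext. 3:{ apply d_plus. apply d_mult. apply (d_pow (S M)). apply (hf_deriv (S M)).
                      apply (d_scal (Sf M) (/ 2)). apply IH. }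
    intro t. change (Sf (S M) t) with (t ^ S M * hermite_fun (S M) t + Sf M t / 2). cbv beta. field.
    change (Nat.pred (S M)) with M. rewrite !S_INR. rewrite <- !tech_pow_Rmult. fixR. field.
Qed.

Lemma Sf_decays M : decays (Sf M).
Proof.
  induction M as [|M IH].
  - eapply decays_ext. 2: apply (decays_hf 0 0). intro x. simpl. ring.
  - eapply decays_ext. 2:{ apply decays_plus. apply (decays_hf (S M) (S M)). apply (decays_scal (/ 2)). exact IH. }
    intro x. change (Sf (S M) x) with (x ^ S M * hermite_fun (S M) x + Sf M x / 2). cbv beta. field.
Qed.

Lemma Sf_zero M : Sf M 0 = / 2 ^ M * / sqrt PI.
Proof.
  induction M as [|M IH].
  - change (Sf 0 0) with (hermite_fun 0 0). rewrite hf_closed. unfold cc.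
    replace (- 0 ^ 2) with 0 by ring. rewrite exp_0. change (Q 0 0) with 1. change (fact 0) with 1%nat.
    rewrite !pow_O. change (INR 1) with 1. pose proof sqrtPI_pos. field. lra.
  - change (Sf (S M) 0) with (0 ^ S M * hermite_fun (S M) 0 + Sf M 0 / 2). rewrite IH.
    rewrite <- !tech_pow_Rmult. pose proof sqrtPI_pos. pose proof (pow_lt 2 M ltac:(lra)). field. lra.
Qed.

Lemma cont_of_deriv (f df : R -> R) : (forall x, is_derive f x (df x)) -> forall x, continuous f x.
Proof. intros H x. apply (ex_derive_continuous (K:=R_AbsRing) (V:=R_NormedModule)). eexists. apply H. Qed.

Lemma d_const (c : R) x : is_derive (fun _ => c) x 0.
Proof. rewrite is_derive_Reals. apply derivable_pt_lim_const. Qed.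

Lemma cont_powhf k c N x : continuous (fun y => y ^ k * c * hermite_fun N y) x.
Proof.
  apply (cont_of_deriv _ (fun y => (INR k * y ^ Nat.pred k * c) * hermite_fun N y + y ^ k * c * (-2 * INR (S N) * hermite_fun (S N) y))).
  intro y. apply (d_mult (fun y => y ^ k * c) (hermite_fun N)). 2: apply hf_deriv.
  eapply d_ext. 3: apply (d_mult (fun y => y ^ k) (fun _ => c)). reflexivity.
  2: apply d_pow. 2: apply d_const. fixR. ring.
Qed.

Lemma m1_even a b : (-1) ^ (a + 2 * b) = (-1) ^ a.
Proof. rewrite pow_add. replace (2 * b)%nat with (b + b)%nat by lia. rewrite pow_add, m1sq. ring. Qed.

Lemma part2 (n : nat) (hn : (1 <= n)%nat) :
  forall t : nat -> R, zeros_enum (hermiteH (2 * n + 1)) (2 * n + 1) t ->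
     is_integral_R
       (fun x => x ^ (2 * n) / INR (fact (2 * n)) * Rabs (hermite_fun (2 * n + 1) x))
       (/ INR (fact (2 * n + 1)) *
        sum_n_m (fun m => (-1) ^ (m + 1) *
          sum_n_m (fun k => / 2 ^ k * t m ^ (2 * n - k) * hermite_fun (2 * n - k) (t m))
            0 (2 * n)) 1 (2 * n + 1)).
Proof.
  intros t HZ. apply zeros_enum_Q in HZ.
  assert (HN : (2 * n + 1 = S (2 * n))%nat) by lia.
  assert (Hf1 : INR (fact (2 * n + 1)) = INR (S (2 * n)) * INR (fact (2 * n))).
  { rewrite HN, fact_simpl, mult_INR. reflexivity. }
  pose proof (INR_fact_neq_0 (2 * n)).
  assert (INR (S (2 * n)) > 0) by (apply lt_0_INR; lia).
  eapply integral_eq.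
  - apply (alt_integral (2 * n + 1) t _ (fun x => - / (2 * INR (fact (2 * n + 1))) * Sf (2 * n) x)
            (fun x => x ^ (2 * n) * / INR (fact (2 * n)) * hermite_fun (2 * n + 1) x)); auto.
    + lia.
    + apply HZ.
    + intro x. eapply d_ext. reflexivity. 2: apply d_scal, Sf_deriv.
      rewrite Hf1, HN. fixR. field. split; lra.
    + intro x. apply cont_powhf.
    + apply decays_lim. apply decays_scal. apply Sf_decays.
    + apply decays_lim. apply decays_scal. apply Sf_decays.
    + intros j x Hj H1 H2. cbv beta. rewrite (abs_hf_sign _ _ ((-1) ^ (2 * n + 1 - j))).
      unfold Rdiv. ring. apply m1sq. apply (Q_sign (2 * n + 1) t); auto. lia. split; auto.
  - rewrite (sum_n_m_ext_loc _ (fun j => (- / (2 * INR (fact (2 * n + 1)))) *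
        ((-1) ^ (j + 1) * sum_n_m (fun k => / 2 ^ k * t j ^ (2 * n - k) * hermite_fun (2 * n - k) (t j)) 0 (2 * n)))).
    + rewrite sum_scal. fixR. field. rewrite Hf1. apply Rmult_integral_contrapositive. split; lra.
    + intros k Hk. rewrite pow_m1_sub by lia. rewrite <- Sf_sum.
      replace (k + (2 * n + 1))%nat with ((k + 1) + 2 * n)%nat by lia. rewrite m1_even. fixR. ring.
Qed.

Lemma zeros_sym n t : (1 <= n)%nat -> zeros_enum (Q (2 * n)) (2 * n) t -> t n < 0 < t (S n).
Proof.
  intros Hn HZ. pose proof HZ as [Hinc Hz].
  set (N := (2 * n)%nat) in *.
  assert (Hmo := t_mono N t Hinc).
  assert (refl : forall m, (1 <= m <= N)%nat -> exists m', (1 <= m' <= N)%nat /\ t m' = - t m).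
  { intros m Hm. assert (H0 : Q N (t m) = 0) by (apply Hz; exists m; auto).
    assert (H1 : Q N (- t m) = 0).
    { rewrite Q_odd_even, H0. ring. }
    apply Hz in H1. destruct H1 as [m' [Hm' E]]. exists m'. split; auto. }
  assert (lt_idx : forall a b, (1 <= a <= N)%nat -> (1 <= b <= N)%nat -> t a < t b -> (a < b)%nat).
  { intros a b Ha Hb H. destruct (le_lt_dec b a); auto. pose proof (Hmo b a ltac:(lia) ltac:(lia) ltac:(lia)). lra. }
  assert (U : forall k, (S k <= N)%nat -> forall m', (1 <= m' <= N)%nat -> t m' = - t (S k) -> (m' <= N - k)%nat).
  { induction k as [|k IH]; intros Hk m' Hm' E. lia.
    destruct (refl (S k) ltac:(lia)) as [m'' [Hm'' E'']].
    specialize (IH ltac:(lia) m'' Hm'' E'').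
    assert (t (S k) < t (S (S k))) by (apply Hinc; lia).
    assert (t m' < t m'') by lra. pose proof (lt_idx m' m'' Hm' Hm'' H0). lia. }
  assert (L : forall k, (k < N)%nat -> forall m', (1 <= m' <= N)%nat -> t m' = - t (N - k)%nat -> (k + 1 <= m')%nat).
  { induction k as [|k IH]; intros Hk m' Hm' E. lia.
    destruct (refl (N - k)%nat ltac:(lia)) as [m'' [Hm'' E'']].
    specialize (IH ltac:(lia) m'' Hm'' E'').
    assert (t (N - S k)%nat < t (N - k)%nat) by (apply Hinc; lia).
    assert (t m'' < t m') by lra. pose proof (lt_idx m'' m' Hm'' Hm' H0). lia. }
  destruct (refl n ltac:(lia)) as [m' [Hm' E]].
  assert (A1 := U (n - 1)%nat ltac:(lia) m' Hm'). replace (S (n - 1)) with n in A1 by lia.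
  specialize (A1 E).
  assert (A2 := L n ltac:(lia) m' Hm'). replace (N - n)%nat with n in A2 by lia.
  specialize (A2 E).
  assert (m' = S n) by lia. subst m'.
  assert (t n < t (S n)) by (apply Hinc; lia). lra.
Qed.

Definition pp (n : nat) (t : nat -> R) (j : nat) : R :=
  if (j <=? n)%nat then t j else if (j =? S n)%nat then 0 else t (j - 1)%nat.

Lemma pp_le n t j : (j <= n)%nat -> pp n t j = t j.
Proof. intro H. unfold pp. apply Nat.leb_le in H. rewrite H. reflexivity. Qed.

Lemma pp_mid n t : pp n t (S n) = 0.
Proof. unfold pp. replace (S n <=? n)%nat with false. rewrite Nat.eqb_refl. reflexivity.
  symmetry. apply Nat.leb_gt. lia. Qed.

Lemma pp_hi n t j : (S (S n) <= j)%nat -> pp n t j = t (j - 1)%nat.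
Proof. intro H. unfold pp. replace (j <=? n)%nat with false. replace (j =? S n)%nat with false. reflexivity.
  symmetry. apply Nat.eqb_neq. lia. symmetry. apply Nat.leb_gt. lia. Qed.

Lemma odd_neg x n : (1 <= n)%nat -> (- x) ^ (2 * n - 1) = - x ^ (2 * n - 1).
Proof.
  intro H. replace (- x) with ((-1) * x) by ring. rewrite Rpow_mult_distr.
  replace (2 * n - 1)%nat with (S (0 + 2 * (n - 1))) at 1 by lia. rewrite m1S, m1_even, pow_O. ring.
Qed.

Lemma part3 (n : nat) (hn : (1 <= n)%nat) :
  forall t : nat -> R, zeros_enum (hermiteH (2 * n)) (2 * n) t ->
     is_integral_R
       (fun x => Rabs x ^ (2 * n - 1) / INR (fact (2 * n - 1)) * Rabs (hermite_fun (2 * n) x))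
       (/ INR (fact (2 * n)) *
          sum_n_m (fun m => (-1) ^ (m + 1) *
            sum_n_m (fun k => / 2 ^ k * t m ^ (2 * n - 1 - k)
                               * hermite_fun (2 * n - 1 - k) (t m)) 0 (2 * n - 1)) 1 n
        + (-1) ^ n / (INR (fact (2 * n)) * 2 ^ (2 * n - 1) * sqrt PI)
        + / INR (fact (2 * n)) *
          sum_n_m (fun m => (-1) ^ m *
            sum_n_m (fun k => / 2 ^ k * t m ^ (2 * n - 1 - k)
                               * hermite_fun (2 * n - 1 - k) (t m)) 0 (2 * n - 1))
            (n + 1) (2 * n)).
Proof.
  intros t HZ. apply zeros_enum_Q in HZ.
  destruct (zeros_sym n t hn HZ) as [Htn Htn1].
  pose proof HZ as [Hinc Hzer].
  assert (Hmo := t_mono (2 * n) t Hinc).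
  set (M := (2 * n - 1)%nat).
  assert (HM : (S M = 2 * n)%nat) by (unfold M; lia).
  assert (Hf1 : INR (fact (2 * n)) = INR (2 * n) * INR (fact M)).
  { rewrite <- HM, fact_simpl, mult_INR. reflexivity. }
  pose proof (INR_fact_neq_0 M).
  assert (INR (2 * n) > 0) by (apply lt_0_INR; lia).
  assert (Hpinc : forall i j, (1 <= i)%nat -> (i < j)%nat -> (j <= 2 * n + 1)%nat -> pp n t i < pp n t j).
  { intros i j Hi Hij Hj.
    destruct (le_lt_dec j n).
    { rewrite !pp_le by lia. apply Hinc; lia. }
    destruct (le_lt_dec i n).
    { rewrite pp_le by lia. destruct (Nat.eq_dec j (S n)).
      - subst. rewrite pp_mid. pose proof (Hmo i n ltac:(lia) ltac:(lia) ltac:(lia)). lra.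
      - rewrite pp_hi by lia. apply Hinc; lia. }
    destruct (Nat.eq_dec i (S n)).
    { subst. rewrite pp_mid, pp_hi by lia. pose proof (Hmo (S n) (j - 1)%nat ltac:(lia) ltac:(lia) ltac:(lia)). lra. }
    rewrite !pp_hi by lia. apply Hinc; lia. }
  eapply integral_eq.
  - apply (alt_integral (2 * n + 1) (pp n t) _ (fun x => - / (2 * INR (fact (2 * n))) * Sf M x)
            (fun x => x ^ M * / INR (fact M) * hermite_fun (2 * n) x)); auto.
    + lia.
    + intro x. eapply d_ext. reflexivity. 2: apply d_scal, Sf_deriv.
      rewrite Hf1, HM. fixR. field. split; lra.
    + intro x. apply cont_powhf.
    + apply decays_lim. apply decays_scal. apply Sf_decays.
    + apply decays_lim. apply decays_scal. apply Sf_decays.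
    + intros j x Hj H1 H2. cbv beta. fold M.
      destruct (le_lt_dec j n) as [Hjn|Hjn].
      *
        assert (Hx : x < 0 /\ inI (2 * n) t j x).
        { destruct (Nat.eq_dec (S j) (S n)) as [E|E].
          - destruct H2 as [H2|H2]. lia. rewrite E, pp_mid in H2. split. lra.
            split. destruct H1 as [H1|H1]. left; auto. right. rewrite pp_le in H1 by lia. auto.
            right. rewrite E. lra.
          - destruct H2 as [H2|H2]. lia. rewrite pp_le in H2 by lia.
            pose proof (Hmo (S j) n ltac:(lia) ltac:(lia) ltac:(lia)). split. lra.
            split. destruct H1 as [H1|H1]. left; auto. right. rewrite pp_le in H1 by lia. auto.
            right. auto. }
        destruct Hx as [Hx0 HxI].
        rewrite (abs_hf_sign _ _ ((-1) ^ (2 * n - j))).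
        2: apply m1sq. 2: apply (Q_sign (2 * n) t); auto; lia.
        rewrite Rabs_left by lra. unfold M. rewrite odd_neg by auto. fold M.
        replace (2 * n + 1 - j)%nat with (S (2 * n - j)) by lia. rewrite m1S. unfold Rdiv. fixR. ring.
      *
        assert (Hx : 0 < x /\ inI (2 * n) t (j - 1) x).
        { destruct H1 as [H1|H1]. lia.
          destruct (Nat.eq_dec j (S n)) as [E|E].
          - subst j. rewrite pp_mid in H1. split. auto. split. right. replace (S n - 1)%nat with n by lia. lra.
            destruct H2 as [H2|H2]. lia. rewrite pp_hi in H2 by lia. right. replace (S (S n - 1)) with (S n) by lia.
            replace (S (S n) - 1)%nat with (S n) in H2 by lia. auto.
          - rewrite pp_hi in H1 by lia.
            pose proof (Hmo (S n) (j - 1)%nat ltac:(lia) ltac:(lia) ltac:(lia)). split. lra.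
            split. right; auto.
            destruct H2 as [H2|H2]. left; lia. right. rewrite pp_hi in H2 by lia.
            replace (S (j - 1)) with j by lia. replace (S j - 1)%nat with j in H2 by lia. auto. }
        destruct Hx as [Hx0 HxI].
        rewrite (abs_hf_sign _ _ ((-1) ^ (2 * n - (j - 1)))).
        2: apply m1sq. 2: apply (Q_sign (2 * n) t); auto; lia.
        rewrite Rabs_right by lra.
        replace (2 * n + 1 - j)%nat with (2 * n - (j - 1))%nat by lia. unfold Rdiv. fixR. ring.
  - set (c := - / (2 * INR (fact (2 * n)))).
    rewrite (sum_n_m_ext _ (fun j => c * ((-1) ^ (2 * n + 1 - j) * Sf M (pp n t j)))).
    2:{ intro j. unfold c. fixR. ring. }
    rewrite sum_scal.
    set (f := fun j => (-1) ^ (2 * n + 1 - j) * Sf M (pp n t j)).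
    rewrite (sum_n_m_Chasles f 1 n (2 * n + 1)) by lia.
    rewrite (sum_Sn_m f (S n) (2 * n + 1)) by lia.
    replace (2 * n + 1)%nat with (S (2 * n)) by lia.
    rewrite <- (sum_n_m_S f (S n) (2 * n)).
    change plus with Rplus.
    rewrite (sum_n_m_ext_loc f (fun m => (-1) ^ (m + 1) * Sf M (t m)) 1 n).
    2:{ intros k Hk. unfold f. rewrite pp_le by lia.
        replace (2 * n + 1 - k)%nat with ((k + 1) + 2 * (n - k))%nat by lia. rewrite m1_even. reflexivity. }
    rewrite (sum_n_m_ext_loc (fun m => f (S m)) (fun m => (-1) ^ m * Sf M (t m)) (S n) (2 * n)).
    2:{ intros k Hk. unfold f. rewrite pp_hi by lia. replace (S k - 1)%nat with k by lia.
        replace (2 * n + 1 - S k)%nat with (2 * n - k)%nat by lia.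
        rewrite pow_m1_sub by lia. replace (k + 2 * n)%nat with (k + 2 * n)%nat by lia. rewrite m1_even. reflexivity. }
    unfold f at 1. rewrite pp_mid, Sf_zero.
    replace (2 * n + 1 - S n)%nat with n by lia.
    rewrite (sum_n_m_ext (fun m => (-1) ^ (m + 1) * sum_n_m (fun k => / 2 ^ k * t m ^ (2 * n - 1 - k)
                               * hermite_fun (2 * n - 1 - k) (t m)) 0 (2 * n - 1))
                         (fun m => (-1) ^ (m + 1) * Sf M (t m))).
    2:{ intro m. unfold M. rewrite Sf_sum. reflexivity. }
    rewrite (sum_n_m_ext (fun m => (-1) ^ m * sum_n_m (fun k => / 2 ^ k * t m ^ (2 * n - 1 - k)
                               * hermite_fun (2 * n - 1 - k) (t m)) 0 (2 * n - 1))
                         (fun m => (-1) ^ m * Sf M (t m))).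
    2:{ intro m. unfold M. rewrite Sf_sum. reflexivity. }
    replace (n + 1)%nat with (S n) by lia. fold M.
    unfold c. pose proof sqrtPI_pos. pose proof (pow_lt 2 M ltac:(lra)).
    fixR. field. rewrite Hf1. repeat split; try lra. apply Rmult_integral_contrapositive. split; lra.
Qed.

Theorem corollary3p4 (n : nat) (hn : (1 <= n)%nat) :
  (forall t : nat -> R, zeros_enum (hermiteH n) n t ->
     is_integral_R (fun x => Rabs (hermite_fun n x))
       (/ INR n * sum_n_m (fun m => (-1) ^ (m + n) * hermite_fun (n - 1) (t m)) 1 n))
  /\
  (forall t : nat -> R, zeros_enum (hermiteH (2 * n + 1)) (2 * n + 1) t ->
     is_integral_R
       (fun x => x ^ (2 * n) / INR (fact (2 * n)) * Rabs (hermite_fun (2 * n + 1) x))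
       (/ INR (fact (2 * n + 1)) *
        sum_n_m (fun m => (-1) ^ (m + 1) *
          sum_n_m (fun k => / 2 ^ k * t m ^ (2 * n - k) * hermite_fun (2 * n - k) (t m))
            0 (2 * n)) 1 (2 * n + 1)))
  /\
  (forall t : nat -> R, zeros_enum (hermiteH (2 * n)) (2 * n) t ->
     is_integral_R
       (fun x => Rabs x ^ (2 * n - 1) / INR (fact (2 * n - 1)) * Rabs (hermite_fun (2 * n) x))
       (/ INR (fact (2 * n)) *
          sum_n_m (fun m => (-1) ^ (m + 1) *
            sum_n_m (fun k => / 2 ^ k * t m ^ (2 * n - 1 - k)
                               * hermite_fun (2 * n - 1 - k) (t m)) 0 (2 * n - 1)) 1 n
        + (-1) ^ n / (INR (fact (2 * n)) * 2 ^ (2 * n - 1) * sqrt PI)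
        + / INR (fact (2 * n)) *
          sum_n_m (fun m => (-1) ^ m *
            sum_n_m (fun k => / 2 ^ k * t m ^ (2 * n - 1 - k)
                               * hermite_fun (2 * n - 1 - k) (t m)) 0 (2 * n - 1))
            (n + 1) (2 * n))).
Proof.
  split. apply part1; auto. split. apply part2; auto. apply part3; auto.
Qed.
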